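(* The fixed points satisfy $\eta_1<\eta_0$.
   Context: Parameters $a,b,p,q\in(0,1)$ with $a+b\ne1$. $\alpha_0(z)=(1-p)(a+b-1)z+1-b+pb$, $\alpha_1(z)=(1-q)(1-a-b)z+b+q-bq$, $r_0(z)=\frac{(a+b-1)z+1-b}{\alpha_0(z)}$, $r_1(z)=\frac{q(a+b-1)z+q-qb}{\alpha_1(z)}$ for $z\in[0,1]$. $\eta_0$ and $\eta_1$ denote the unique fixed points in $[0,1]$ of $r_0$ and $r_1$ respectively. *)

(* Defs.v *)
From Stdlib Require Import Reals.
Open Scope R_scope.

Definition alpha0 (a b p : R) (z : R) : R := (1 - p) * (a + b - 1) * z + 1 - b + p * b.
Definition alpha1 (a b q : R) (z : R) : R := (1 - q) * (1 - a - b) * z + b + q - b * q.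
Definition r0 (a b p : R) (z : R) : R := ((a + b - 1) * z + 1 - b) / alpha0 a b p z.
Definition r1 (a b q : R) (z : R) : R := (q * (a + b - 1) * z + q - q * b) / alpha1 a b q z.

(* Main.v *)
Require Import Defs.
From Stdlib Require Import Reals Lra Psatz.
Open Scope R_scope.

Theorem lemma2p32 (a b p q eta0 eta1 : R) :
  0 < a < 1 -> 0 < b < 1 -> 0 < p < 1 -> 0 < q < 1 -> a + b <> 1 ->
  0 <= eta0 <= 1 -> r0 a b p eta0 = eta0 ->
  0 <= eta1 <= 1 -> r1 a b q eta1 = eta1 ->
  eta1 < eta0.
Proof.
  intros Ha Hb Hp Hq Hab H0 E0 H1 E1.
  unfold r0, r1, alpha0, alpha1 in *.
  set (c := a + b - 1) in *.
  assert (Hc: c < b) by (unfold c; lra).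
  assert (Dpos0 : forall z, 0 <= z <= 1 -> 0 < (1 - p) * c * z + 1 - b + p * b).
  { intros z Hz. unfold c.
    replace ((1 - p) * (a + b - 1) * z + 1 - b + p * b) with ((1-z)*(1-b+p*b) + z*(a*(1-p)+p)) by ring.
    assert (0 < 1-b+p*b) by nra. assert (0 < a*(1-p)+p) by nra.
    destruct (Rle_lt_dec (1-b+p*b) (a*(1-p)+p)); nra. }
  assert (Dpos1 : forall z, 0 <= z <= 1 -> 0 < (1 - q) * (1 - a - b) * z + b + q - b * q).
  { intros z Hz.
    replace ((1 - q) * (1 - a - b) * z + b + q - b * q) with ((1-z)*(b+q-b*q) + z*(1-a+q*a)) by ring.
    assert (0 < b+q-b*q) by nra. assert (0 < 1-a+q*a) by nra.
    destruct (Rle_lt_dec (b+q-b*q) (1-a+q*a)); nra. }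
  assert (Npos : forall z, 0 <= z <= 1 -> 0 < c * z + 1 - b).
  { intros z Hz. unfold c.
    replace ((a + b - 1) * z + 1 - b) with ((1-z)*(1-b) + z*a) by ring.
    destruct (Rle_lt_dec (1-b) a); nra. }
  assert (czb : forall z, 0 <= z <= 1 -> c * z < b).
  { intros z Hz. unfold c. nra. }
  pose proof (Dpos0 _ H0) as D0. pose proof (Dpos1 _ H1) as D1.
  pose proof (Dpos0 _ H1) as D0'.
  pose proof (Npos _ H1) as N1. pose proof (czb _ H1) as C1.
  assert (G0 : c * eta0 + 1 - b = eta0 * ((1 - p) * c * eta0 + 1 - b + p * b)).
  { rewrite <- E0 at 2. field. lra. }
  assert (G1 : q * c * eta1 + q - q * b = eta1 * ((1 - q) * (1 - a - b) * eta1 + b + q - b * q)).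
  { rewrite <- E1 at 2. field. lra. }
  clear E0 E1.
  set (D0e := (1 - p) * c * eta1 + 1 - b + p * b) in *.
  set (D1e := (1 - q) * (1 - a - b) * eta1 + b + q - b * q) in *.
  assert (QD : q * D0e < D1e).
  { unfold D0e, D1e. assert (1 - a - b = - c) by (unfold c; ring).
    rewrite H. assert (0 < 1 - q * p) by nra. nra. }
  assert (Gp : eta1 * D0e < c * eta1 + 1 - b).
  { assert (eta1 * D0e * D1e < (c * eta1 + 1 - b) * D1e).
    { replace (eta1 * D0e * D1e) with (D0e * (eta1 * D1e)) by ring.
      rewrite <- G1. replace (q * c * eta1 + q - q * b) with (q * (c * eta1 + 1 - b)) by ring.
      nra. }
    nra. }
  unfold D0e in Gp.
  set (A := (1 - p) * c). set (B := 1 - b + p * b - c).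
  assert (Hh0 : A * eta0 * eta0 + B * eta0 - (1 - b) = 0) by (unfold A, B; nra).
  assert (Hh1 : A * eta1 * eta1 + B * eta1 - (1 - b) < 0) by (unfold A, B; nra).
  assert (Hhone : A + B - (1 - b) > 0) by (unfold A, B, c; nra).
  assert (F1 : (eta1 - eta0) * (A * (eta1 + eta0) + B) < 0) by nra.
  destruct (Rlt_or_le eta1 eta0) as [|Hle]; [assumption|exfalso].
  assert (Hlt : eta0 < eta1) by (destruct Hle; [assumption| subst; nra]).
  assert (F2 : A * (eta1 + eta0) + B < 0).
  { destruct (Rlt_or_le (A * (eta1 + eta0) + B) 0); [assumption|]. nra. }
  assert (cpa : 0 < c \/ c < 0) by (unfold c; lra).
  destruct cpa as [cp|cn].
  - assert (Ap : 0 < A) by (unfold A; nra).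
    assert (e0p : 0 < eta0) by (destruct (proj1 H0); [assumption| subst; nra]).
    assert (A * eta0 + B > 0) by nra.
    nra.
  - assert (An : A < 0) by (unfold A; nra).
    assert (F3 : (1 - eta0) * (A * (1 + eta0) + B) > 0) by nra.
    assert (A * (1 + eta0) + B > 0) by nra.
    nra.
Qed.
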